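(* Suppose $\mathfrak r$ is an irreducible representation of $H$. Then for every simple ideal $\mathfrak g_i$ of $\mathfrak g$, the projection of $\mathbf a$ onto $\mathfrak g_i$ (with respect to the decomposition of $\mathfrak g$ into simple ideals) is nonzero.
   Context: $G=\mathbf G(\mathbb R)$ where $\mathbf G$ is a connected semisimple $\mathbb Q$-group, with Lie algebra $\mathfrak g$. $\mathbf H\le\mathbf G$ is a connected semisimple $\mathbb R$-subgroup, $H=\mathbf H(\mathbb R)$ without compact factors, with Lie algebra $\mathfrak h=\bigoplus_i\mathfrak h_i$ (simple ideals), and $\mathfrak r$ is an $\mathrm{Ad}(H)$-invariant complement, $\mathfrak g=\mathfrak h\oplus\mathfrak r$. $\mathbf a\in\mathfrak h$ is a semisimple element, $\mathrm{ad}\,\mathbf a$ diagonalizable over $\mathbb R$, whose projection to each simple ideal $\mathfrak h_i$ of $\mathfrak h$ is nonzero. *)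

(* Defs.v *)
(* Finite-dimensional real Lie algebras, modelled on a
   vectType V with a bracket br : V -> V -> V; subspaces are {vspace V}. *)
From HB Require Import structures.
From mathcomp Require Import all_boot all_order all_algebra.
Set Implicit Arguments. Unset Strict Implicit. Unset Printing Implicit Defensive.
Import Order.TTheory GRing.Theory Num.Theory.
Local Open Scope ring_scope.


Section Lie.
Variables (R : fieldType) (V : vectType R) (br : V -> V -> V).

Definition lie_algebra : Prop :=
  [/\ (forall (c : R) x y z, br (c *: x + y) z = c *: br x z + br y z),
      (forall (c : R) x y z, br z (c *: x + y) = c *: br z x + br z y),
      (forall x, br x x = 0) &
      (forall x y z, br x (br y z) + br y (br z x) + br z (br x y) = 0)].

Definition bracket_sp (U W : {vspace V}) : {vspace V} :=
  (\sum_(i < \dim U) \sum_(j < \dim W) <[br (vbasis U)`_i (vbasis W)`_j]>)%VS.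

Definition subalgebra (L : {vspace V}) : Prop :=
  forall x y, x \in L -> y \in L -> br x y \in L.

Definition ideal_in (L I : {vspace V}) : Prop :=
  (I <= L)%VS /\ forall x y, x \in L -> y \in I -> br x y \in I.

Definition derived_series (I : {vspace V}) (k : nat) : {vspace V} :=
  iter k (fun W => bracket_sp W W) I.

Definition lie_solvable (I : {vspace V}) : Prop :=
  exists k, derived_series I k = 0%VS.

Definition lie_semisimple (L : {vspace V}) : Prop :=
  subalgebra L /\ forall I, ideal_in L I -> lie_solvable I -> I = 0%VS.

Definition lie_simple (L : {vspace V}) : Prop :=
  [/\ subalgebra L, bracket_sp L L != 0%VS &
      forall J, ideal_in L J -> J = 0%VS \/ J = L].

Definition simple_ideal_decomp (L : {vspace V}) (n : nat)
    (Ls : 'I_n -> {vspace V}) : Prop :=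
  [/\ forall i, ideal_in L (Ls i) /\ lie_simple (Ls i),
      directv (\sum_(i < n) Ls i) &
      (\sum_(i < n) Ls i)%VS = L].

Definition proj_on (n : nat) (Ls : 'I_n -> {vspace V}) (i : 'I_n) : 'End(V) :=
  daddv_pi (Ls i) (\sum_(j < n | j != i) Ls j)%VS.

Definition ad_invariant (L W : {vspace V}) : Prop :=
  forall x w, x \in L -> w \in W -> br x w \in W.

Definition irreducible_rep (L W : {vspace V}) : Prop :=
  [/\ W != 0%VS, ad_invariant L W &
      forall U, (U <= W)%VS -> ad_invariant L U -> U = 0%VS \/ U = W].

Definition ad_diagonalizable (x : V) : Prop :=
  exists (b : (\dim (fullv : {vspace V})).-tuple V)
         (lam : 'I_(\dim (fullv : {vspace V})) -> R),
    basis_of fullv b /\ forall k, br x (tnth b k) = lam k *: tnth b k.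

Definition killing (U : {vspace V}) (x y : V) : R :=
  \sum_(k < \dim U) coord (vbasis U) k (br x (br y (vbasis U)`_k)).

End Lie.

(* a (lie_simple) real Lie algebra U is non-compact: its Killing form
   is not negative definite *)
Definition noncompact (R : realFieldType) (V : vectType R) (br : V -> V -> V)
    (U : {vspace V}) : Prop :=
  exists x, [/\ x \in U, x != 0 & 0 <= killing br U x x].

(* Main.v *)
Require Import Defs.
From HB Require Import structures.
From mathcomp Require Import all_boot all_order all_algebra.
From mathcomp Require Import reals.
Import Order.TTheory GRing.Theory Num.Theory.
Local Open Scope ring_scope.

Set Implicit Arguments.
Section Helpers.
Variables (R : fieldType) (V : vectType R) (br : V -> V -> V).
Hypothesis Hlie : lie_algebra br.

Lemma brDl x y z : br (x + y) z = br x z + br y z.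
Proof. case: (Hlie) => Hl _ _ _. by rewrite -[x]scale1r Hl !scale1r. Qed.
Lemma brDr x y z : br z (x + y) = br z x + br z y.
Proof. case: (Hlie) => _ Hr _ _. by rewrite -[x]scale1r Hr !scale1r. Qed.
Lemma br0l z : br 0 z = 0.
Proof.
case: (Hlie) => Hl _ _ _. have := Hl (-1) z z z.
by rewrite scaleN1r addNr => ->; rewrite scaleN1r addNr.
Qed.
Lemma br0r z : br z 0 = 0.
Proof.
case: (Hlie) => _ Hr _ _. have := Hr (-1) z z z.
by rewrite scaleN1r addNr => ->; rewrite scaleN1r addNr.
Qed.
Lemma brZl c x z : br (c *: x) z = c *: br x z.
Proof. case: (Hlie) => Hl _ _ _. by have := Hl c x 0 z; rewrite !addr0 br0l addr0 => ->. Qed.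
Lemma brZr c x z : br z (c *: x) = c *: br z x.
Proof. case: (Hlie) => _ Hr _ _. by have := Hr c x 0 z; rewrite !addr0 br0r addr0 => ->. Qed.
Lemma brxx x : br x x = 0.
Proof. by have [_ _ H _] := Hlie. Qed.
Lemma brN x y : br x y = - br y x.
Proof.
have := brxx (x + y); rewrite brDl !brDr !brxx add0r addr0.
by move/eqP; rewrite addr_eq0 => /eqP.
Qed.

Lemma bracket_sp_eq0 (L : {vspace V}) :
  (forall y z, y \in L -> z \in L -> br y z = 0) -> bracket_sp br L L = 0%VS.
Proof.
move=> H; rewrite /bracket_sp; apply: big1 => i _; apply: big1 => j _.
rewrite H ?vline0 //; apply: vbasis_mem; apply: mem_nth; by rewrite size_tuple.
Qed.

Lemma ad_inv_sum (I : finType) (P : pred I) (L : {vspace V}) (Ls : I -> {vspace V}) :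
  (forall j, P j -> ad_invariant br L (Ls j)) ->
  ad_invariant br L (\sum_(j | P j) Ls j)%VS.
Proof.
move=> H x y xL; move: y; elim/big_rec: _ => [|j W Pj IH] y.
  by rewrite memv0 => /eqP ->; rewrite br0r mem0v.
case/memv_addP => u uj [w wW ->]; rewrite brDr; apply: memv_add.
  exact: H. exact: IH.
Qed.

End Helpers.

Theorem lemma2p5 (R : realType) (V : vectType R) (br : V -> V -> V)
    (h r : {vspace V}) (n m : nat)
    (gs : 'I_n -> {vspace V}) (hs : 'I_m -> {vspace V}) (a : V) :
  lie_algebra br ->
  lie_semisimple br fullv ->
  simple_ideal_decomp br fullv gs ->
  subalgebra br h ->
  lie_semisimple br h ->
  simple_ideal_decomp br h hs ->
  (forall k, noncompact br (hs k)) ->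
  directv (h + r)%VS ->
  (h + r)%VS = fullv ->
  ad_invariant br h r ->
  a \in h ->
  ad_diagonalizable br a ->
  (forall k, proj_on hs k a != 0) ->
  irreducible_rep br h r ->
  forall i, proj_on gs i a != 0.
Proof.
move=> Hlie Hss [Hgs Hgdir Hgsum] Hhsub Hhss [Hhs Hhdir Hhsum] _ Hhr_dir
  Hhr_full Hr_inv Ha _ Hak [Hr0 _ Hirr] i.
apply/negP => /eqP Hpi.
set C := (\sum_(j < n | j != i) gs j)%VS.
have GC0 : (gs i :&: C = 0)%VS by move/directv_sumP: Hgdir => /(_ i isT).
have aC : a \in C.
  have : a \in (\sum_(j < n) gs j)%VS by rewrite Hgsum memvf.
  rewrite (bigD1 i) //= => /(daddv_pi_add GC0).
  rewrite /proj_on in Hpi; rewrite Hpi add0r => <-; exact: memv_pi.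
have Cinv : ad_invariant br fullv C by apply: (@ad_inv_sum _ _ _ Hlie _ (fun j => j != i)) => j _; exact: (Hgs j).1.2.
have hC : (h <= C)%VS.
  rewrite -Hhsum; apply/subv_sumP => k _.
  have [Hk_id [Hk_sub Hk_br Hk_ideals]] := Hhs k.
  have : ideal_in br (hs k) (hs k :&: C).
    split; first exact: capvSl.
    move=> x y xk /memv_capP [yk yC]; apply/memv_capP; split.
      exact: Hk_sub. exact: Cinv (memvf x) yC.
  case/Hk_ideals => [kC0 | kC]; last by apply/capv_idPl.
  exfalso.
  set ak := proj_on hs k a.
  set D := (\sum_(j < m | j != k) hs j)%VS.
  have kD0 : (hs k :&: D = 0)%VS by move/directv_sumP: Hhdir => /(_ k isT).
  have : a \in (\sum_(j < m) hs j)%VS by rewrite Hhsum.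
  rewrite (bigD1 k) //= => /(daddv_pi_add kD0) aE.
  set ad := daddv_pi D (hs k) a in aE.
  have adD : ad \in D by exact: memv_pi.
  have Dh : (D <= h)%VS by apply/subv_sumP => j _; exact: (Hhs j).1.1.
  have Dinv : ad_invariant br h D by apply: (@ad_inv_sum _ _ _ Hlie _ (fun j => j != k)) => j _; exact: (Hhs j).1.2.
  have akk : ak \in hs k by exact: memv_pi.
  have central : forall x, x \in hs k -> br x ak = 0.
    move=> x xk; have xh := subvP Hk_id.1 x xk.
    have e1 : br x ad = 0.
      apply/eqP; rewrite -memv0 -kD0 memv_cap; apply/andP; split.
        rewrite (brN Hlie) rpredN; exact: (Hhs k).1.2 _ _ (subvP Dh _ adD) xk.
      exact: Dinv xh adD.
    have e2 : br x a \in C := Cinv x a (memvf x) aC.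
    apply/eqP; rewrite -memv0 -kC0 memv_cap (Hk_sub _ _ xk akk) /=.
    by move: e2; rewrite -{1}aE (brDr Hlie) e1 addr0.
  have : ideal_in br (hs k) <[ak]>.
    split; first by rewrite -memvE.
    by move=> x y xk /vlineP [c ->]; rewrite (brZr Hlie) central // scaler0 mem0v.
  case/Hk_ideals => [l0 | lk].
    by move: (memv_line ak); rewrite l0 memv0; apply/negP; exact: Hak.
  have : bracket_sp br <[ak]> <[ak]> = 0%VS.
    apply: bracket_sp_eq0 => y z /vlineP[c ->] /vlineP[d ->].
    by rewrite (brZl Hlie) (brZr Hlie) (brxx Hlie) !scaler0.
  by rewrite lk; apply/eqP.
have Gh : forall x y, x \in h -> y \in gs i -> br x y = 0.
  move=> x y xh yG; apply/eqP; rewrite -memv0 -GC0 memv_cap; apply/andP; split.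
    exact: (Hgs i).1.2 _ _ (memvf x) yG.
  rewrite (brN Hlie) rpredN; exact: Cinv y x (memvf y) (subvP hC x xh).
have G0 : gs i != 0%VS.
  case: (Hgs i).2 => _ Gbr _; apply: contraNneq Gbr => ->.
  by apply/eqP; apply: bracket_sp_eq0 => y z; rewrite memv0 => /eqP ->; rewrite (br0l Hlie).
set g := vpick (gs i).
have gG : g \in gs i by exact: memv_pick.
have g0 : g != 0 by rewrite vpick0.
have rh0 : (r :&: h = 0)%VS by rewrite capvC; apply/directv_addP.
have : g \in (r + h)%VS by rewrite addvC Hhr_full memvf.
move/(daddv_pi_add rh0) => gE.
set u := daddv_pi r h g in gE; set w := daddv_pi h r g in gE.
have uc : forall x, x \in h -> br x u = 0.
  move=> x xh; apply/eqP; rewrite -memv0 -rh0 memv_cap Hr_inv ?memv_pi //=.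
  have -> : br x u = br x g - br x w by rewrite -gE (brDr Hlie) addrK.
  by rewrite Gh // sub0r rpredN Hhsub // memv_pi.
have u0 : u != 0.
  apply/eqP => u0; move: gE; rewrite u0 add0r => gw.
  move/eqP: g0; apply; apply/eqP; rewrite -memv0 -GC0 memv_cap gG /=.
  by rewrite -gw; apply: (subvP hC); exact: memv_pi.
have ur : <[u]>%VS = r.
  case: (Hirr <[u]>%VS) => //.
  - by rewrite -memvE memv_pi.
  - by move=> x y xh /vlineP[c ->]; rewrite (brZr Hlie) uc // scaler0 mem0v.
  - by move=> l0; move: (memv_line u); rewrite l0 memv0 (negbTE u0).
have rz : forall x y, y \in r -> br x y = 0.
  move=> x y; rewrite -ur => /vlineP[c ->].
  have : x \in (h + r)%VS by rewrite Hhr_full memvf.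
  case/memv_addP => x1 x1h [x2 x2r ->].
  rewrite (brDl Hlie) (brZr Hlie) uc // scaler0 add0r.
  move: x2r; rewrite -ur => /vlineP[d ->].
  by rewrite (brZl Hlie) (brZr Hlie) (brxx Hlie) !scaler0.
apply: (negP Hr0); apply/eqP; apply: (Hss.2 r).
  split; first exact: subvf.
  by move=> x y _ yr; rewrite (rz x y yr) mem0v.
exists 1%N; rewrite /derived_series /=; apply: bracket_sp_eq0 => y z _ zr.
exact: rz.
Qed.
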